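(* Assume $\mathcal{R}(\Theta^* )\le r$, $\mathcal{R}^*(\Phi(x))\le d$ for all $x\in\mathcal{X}$, and $\|\Phi(x)\|_{\max}\le\phi_{\max}$ for all $x\in\mathcal{X}$. Let $\bar r>0$. Then for every $\Theta\in\mathbb{R}^{k_1\times k_2}$ with $\mathcal{R}(\Theta)\le\bar r$, the largest eigenvalue of the Hessian of $\mathcal{L}_n$ (viewed as a function of $\mathrm{vec}(\Theta)$) at $\Theta$ is at most $4k_1k_2\phi_{\max}^2\exp(2\bar rd)$; i.e. $\mathcal{L}_n$ is $4k_1k_2\phi_{\max}^2\exp(2\bar rd)$-smooth on $\{\Theta:\mathcal{R}(\Theta)\le\bar r\}$.
   Context: Let $\mathcal{X}\subset\mathbb{R}^p$ be a bounded set with finite positive volume and $\mathcal{U}_{\mathcal{X}}$ the uniform distribution on it. $\Phi:\mathcal{X}\to\mathbb{R}^{k_1\times k_2}$ is a natural statistic, $\langle\langle M,N\rangle\rangle=\sum_{i,j}M_{ij}N_{ij}$, $\mathcal{R}$ a norm on $\mathbb{R}^{k_1\times k_2}$ with dual norm $\mathcal{R}^*(M)=\sup\{\langle\langle M,N\rangle\rangle:\mathcal{R}(N)\le1\}$, $\|M\|_{\max}=\max_{ij}|M_{ij}|$, $r,d,\phi_{\max}$ constants, $\Theta^*$ the true parameter of the density $f_{\mathbf{x}}(x;\Theta)\propto\exp(\langle\langle\Theta,\Phi(x)\rangle\rangle)$ on $\mathcal{X}$. Given samples $x^{(1)},\dots,x^{(n)}\in\mathcal{X}$, $\tilde\Phi(x)=\Phi(x)-\mathbb{E}_{\mathcal{U}_{\mathcal{X}}}[\Phi]$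 and $\mathcal{L}_n(\Theta)=\frac1n\sum_{t=1}^n\exp(-\langle\langle\Theta,\tilde\Phi(x^{(t)})\rangle\rangle)$. *)

(* Defs.v *)
From HB Require Import structures.
From mathcomp Require Import all_boot all_order all_algebra.
From mathcomp Require Import all_classical all_reals all_analysis.
Set Implicit Arguments.
Unset Strict Implicit.
Unset Printing Implicit Defensive.
Import Order.TTheory GRing.Theory Num.Theory.
Import numFieldNormedType.Exports.
Local Open Scope classical_set_scope.
Local Open Scope ring_scope.

Section Defs.
Variable R : realType.

Definition frob {k1 k2 : nat} (M N : 'M[R]_(k1, k2)) : R :=
  \sum_(i < k1) \sum_(j < k2) M i j * N i j.

Definition maxnorm {k1 k2 : nat} (M : 'M[R]_(k1, k2)) : R :=
  \big[Num.max/0]_(i < k1) \big[Num.max/0]_(j < k2) `|M i j|.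

Definition is_norm {k1 k2 : nat} (N : 'M[R]_(k1, k2) -> R) : Prop :=
  [/\ forall M, 0 <= N M,
      forall M, N M = 0 -> M = 0,
      forall (a : R) M, N (a *: M) = `|a| * N M &
      forall M M', N (M + M') <= N M + N M'].

Definition dual_norm {k1 k2 : nat} (N : 'M[R]_(k1, k2) -> R)
    (M : 'M[R]_(k1, k2)) : R :=
  sup [set y : R | exists2 A, N A <= 1 & y = frob M A].

(** Iterated Lebesgue integral over R^p (points are p-tuples), i.e. the
    integral w.r.t. p-dimensional Lebesgue measure (Tonelli/Fubini). *)
Fixpoint iter_lebesgue_integral (p : nat) : (p.-tuple R -> \bar R) -> \bar R :=
  match p return (p.-tuple R -> \bar R) -> \bar R with
  | 0 => fun f => f [tuple]
  | p'.+1 => fun f =>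
      (\int[@lebesgue_measure R]_x
         iter_lebesgue_integral (fun t : p'.-tuple R => f (cons_tuple x t)))%E
  end.

Definition volume {p : nat} (X : set (p.-tuple R)) : \bar R :=
  iter_lebesgue_integral (fun x => (\1_X x)%:E).

Definition uniform_mean {p k1 k2 : nat} (X : set (p.-tuple R))
    (Phi : p.-tuple R -> 'M[R]_(k1, k2)) : 'M[R]_(k1, k2) :=
  \matrix_(i, j) (fine (iter_lebesgue_integral
                          (fun x => (\1_X x * Phi x i j)%:E))
                  / fine (volume X)).

Definition Phi_tilde {p k1 k2 : nat} (X : set (p.-tuple R))
    (Phi : p.-tuple R -> 'M[R]_(k1, k2)) (x : p.-tuple R) : 'M[R]_(k1, k2) :=
  Phi x - uniform_mean X Phi.

Definition Ln {p k1 k2 n : nat} (X : set (p.-tuple R))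
    (Phi : p.-tuple R -> 'M[R]_(k1, k2)) (xs : 'I_n -> p.-tuple R)
    (Theta : 'M[R]_(k1, k2)) : R :=
  n%:R^-1 * \sum_(t < n) expR (- frob Theta (Phi_tilde X Phi (xs t))).

Definition hessian {m : nat} (f : 'rV[R]_m -> R) (v : 'rV[R]_m) : 'M[R]_m :=
  \matrix_(a, b) ('D_(delta_mx 0 a) ('D_(delta_mx 0 b) f) v).

End Defs.

(* Main.v *)
Require Import Defs.
From HB Require Import structures.
From mathcomp Require Import all_boot all_order all_algebra.
From mathcomp Require Import all_classical all_reals all_analysis.
From mathcomp Require Import measurable_realfun.
From mathcomp Require Import ring lra.
Import Order.TTheory GRing.Theory Num.Theory.
Import numFieldNormedType.Exports.
Local Open Scope classical_set_scope.
Local Open Scope ring_scope.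
Section Integ.

Variable R : realType.

Lemma integrable_indicT d (T : measurableType d) (mu : {measure set T -> \bar R}) (A : set T) :
  measurable A -> (mu A < +oo)%E -> mu.-integrable setT (fun x => (\1_A x)%:E).
Proof.
move=> mA muA; apply/integrableP; split.
  by apply/measurable_EFinP; exact: measurable_indic.
rewrite (eq_integral (fun x => (\1_A x)%:E)); last first.
  by move=> x _; rewrite gee0_abs // lee_fin.
by rewrite integral_indic // setIT.
Qed.

Lemma integrable_bdd d (T : measurableType d) (mu : {measure set T -> \bar R})
   (f : T -> R) (A : set T) (M : R) :
  measurable_fun setT f -> measurable A -> (mu A < +oo)%E ->
  (forall x, `|f x| <= M * \1_A x) -> mu.-integrable setT (EFin \o f).
Proof.
move=> mf mA muA hb.
apply: (le_integrable measurableT (g := fun x => (M%:E * (\1_A x)%:E)%E)).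
- exact/measurable_EFinP.
- move=> x _ /=; rewrite lee_fin; apply: (le_trans (hb x)); exact: ler_norm.
- by apply: integrableZl => //; exact: integrable_indicT.
Qed.
End Integ.

Section Step.
Variable R : realType.
Variable p : nat.
Variable mu : {sigma_finite_measure set (p.-tuple R) -> \bar R}.

Definition ctup (z : measurableTypeR R * p.-tuple R) : p.+1.-tuple R := cons_tuple z.1 z.2.
Definition dtup (y : p.+1.-tuple R) : measurableTypeR R * p.-tuple R := (thead y, [tuple of behead y]).

Lemma ctupK : cancel ctup dtup.
Proof. case=> x t; rewrite /dtup /ctup /=; congr pair => //; exact: val_inj. Qed.
Lemma dtupK : cancel dtup ctup.
Proof. by move=> y; apply: val_inj; rewrite /= [in RHS](tuple_eta y). Qed.

Lemma mctup : measurable_fun setT ctup.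
Proof.
exact: (@measurable_cons _ _ (measurableTypeR R * p.-tuple R)%type R fst p snd).
Qed.

Lemma mdtup : measurable_fun setT dtup.
Proof.
apply: measurable_fun_pair.
  exact: (@measurable_tnth _ R p.+1 ord0).
exact: measurable_behead.
Qed.

Local Notation PM := (@lebesgue_measure R \x mu)%E.
Definition mu' : set (p.+1.-tuple R) -> \bar R := fun A => PM (ctup @^-1` A).

Let mu'0 : mu' set0 = 0%E.
Proof. by rewrite /mu' preimage_set0 measure0. Qed.

Let mu'_ge0 A : (0 <= mu' A)%E.
Proof. by apply: measure_ge0. Qed.

Let mu'_sigma_additive : semi_sigma_additive mu'.
Proof.
move=> F mF tF mUF; rewrite /mu' preimage_bigcup.
apply: measure_semi_sigma_additive.
- by move=> n; rewrite -[X in measurable X]setTI; exact: mctup.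
- apply/trivIsetP => /= i j _ _ ij; rewrite -preimage_setI.
  by move/trivIsetP : tF => /(_ _ _ _ _ ij) ->//; rewrite preimage_set0.
- by rewrite -preimage_bigcup -[X in measurable X]setTI; exact: mctup.
Qed.

HB.instance Definition _ := isMeasure.Build _ _ _ mu' mu'0 mu'_ge0 mu'_sigma_additive.

Local Open Scope ereal_scope.
Let PM_sigma_finite : sigma_finite setT PM.
Proof.
have /sigma_finiteP[F [TF ndF Foo]] := sigma_finiteT (@lebesgue_measure R).
have /sigma_finiteP[G [TG ndG Goo]] := sigma_finiteT mu.
exists (fun n => F n `*` G n).
 rewrite -setXTT TF TG predeqE => -[x y]; split.
    move=> [/= [n _ Fnx] [k _ Gky]]; exists (maxn n k) => //; split.
    - by move: x Fnx; exact/subsetPset/ndF/leq_maxl.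
    - by move: y Gky; exact/subsetPset/ndG/leq_maxr.
  by move=> [n _ []/= ? ?]; split; exists n.
move=> k; have [? ?] := Foo k; have [? ?] := Goo k.
split; first exact: measurableX.
by rewrite product_measure1E// lte_mul_pinfty// ge0_fin_numE.
Qed.

Let mu'_sigma_finite : sigma_finite setT mu'.
Proof.
have [F FU Fm] := PM_sigma_finite.
exists (fun k => dtup @^-1` F k).
  apply/seteqP; split => // y _.
  have : [set: _] (dtup y) by [].
  by rewrite FU => -[k _ Fk]; exists k.
move=> k; split.
  by rewrite -[X in measurable X]setTI; apply: mdtup => //; case: (Fm k).
rewrite /mu' (_ : ctup @^-1` (dtup @^-1` F k) = F k); first by case: (Fm k).
by apply/seteqP; split => z /=; rewrite ctupK.
Qed.

HB.instance Definition _ := Measure_isSigmaFinite.Build _ _ _ mu' mu'_sigma_finite.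

End Step.
Arguments ctup {R p}.
Arguments dtup {R p}.
Arguments mu' {R p}.

Section Key.
Variable R : realType.
Local Open Scope ring_scope.

Definition box p (B : R) : set (p.-tuple R) := [set x | forall i, `|tnth x i| <= B].

Lemma box_measurable p B : measurable (box p B).
Proof.
have -> : box p B = \bigcap_(i in [set: 'I_p]) ((fun x => tnth x i) @^-1` `[-B, B]).
  apply/seteqP; split => x /=.
    by move=> h i _ /=; rewrite in_itv /= -ler_norml.
  by move=> h i; have := h i I; rewrite /= in_itv /= -ler_norml.
apply: fin_bigcap_measurable; first exact: finite_finset.
move=> i _; rewrite -[_ @^-1` _]setTI.
by apply: measurable_tnth => //.
Qed.

Definition good p (f : p.-tuple R -> R) :=
  [/\ measurable_fun setT f, exists M, forall x, `|f x| <= M &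
      exists B, forall x, f x != 0 -> box p B x].
Arguments good {p} f.

Lemma good_bound p (f : p.-tuple R -> R) : good f ->
  exists M B, forall x, `|f x| <= M * \1_(box p B) x.
Proof.
case=> _ [M hM] [B hB]; exists M, B => x.
rewrite indicE; case: (boolP (x \in box p B)) => xB.
  by rewrite mulr1.
have -> : f x = 0.
  by apply/eqP; apply: contraNT xB => /hB; rewrite inE.
by rewrite normr0 mulr0.
Qed.

Lemma good_section p (f : p.+1.-tuple R -> R) x : good f -> good (fun t => f (cons_tuple x t)).
Proof.
case=> mf [M hM] [B hB]; split.
- apply: (measurableT_comp mf).
  exact: (@measurable_cons _ _ (p.-tuple R) R (cst x) p id).
- by exists M.
- exists B => t /hB hb i.
  by have := hb (lift ord0 i); rewrite tnthS.
Qed.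

Arguments good_bound {p f}.
Arguments good_section {p f}.

Lemma preimage_box p B : ctup @^-1` (box p.+1 B) = `[-B, B]%classic `*` box p B.
Proof.
apply/seteqP; split => -[x t] /=.
  move=> h; split.
    by have := h ord0; rewrite /= in_itv /= -ler_norml (tnth_nth 0).
  by move=> i; have := h (lift ord0 i); rewrite tnthS.
move=> [hx ht] i; case: (unliftP ord0 i) => [j ->|->].
  by rewrite tnthS.
by move: hx; rewrite /= in_itv /= -ler_norml (tnth_nth 0).
Qed.

Lemma key p : exists mu : {sigma_finite_measure set (p.-tuple R) -> \bar R},
  (forall B, (mu (box p B) < +oo)%E) /\
  (forall f, good f -> iter_lebesgue_integral (EFin \o f) = (\int[mu]_x (f x)%:E)%E).
Proof.
elim: p => [|p [mu [hb hi]]].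
  exists (\d_([tuple] : 0.-tuple R)); split.
    by move=> B; rewrite /= diracE ltry.
  move=> f [mf _ _] /=.
  rewrite integral_dirac //; last exact/measurable_EFinP.
  by rewrite diracT mul1e.
have hb' B : (mu' mu (box p.+1 B) < +oo)%E.
  rewrite /mu' preimage_box product_measure1E //; last exact: box_measurable.
  apply: lte_mul_pinfty => //.
  suff : (@lebesgue_measure R [set` `[-B, B]%R]) \is a fin_num by [].
  by rewrite lebesgue_measure_itv /=; case: ifP.

exists (mu' mu); split => // f gf.
have intf : (@lebesgue_measure R \x mu)%E.-integrable setT (EFin \o (f \o ctup)).
  have [M [B hMB]] := good_bound gf.
  apply: (@integrable_bdd R _ _ _ _ (ctup @^-1` box p.+1 B) M).
  - by apply: measurableT_comp; [case: gf|exact: mctup].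
  - by rewrite -[X in measurable X]setTI; apply: mctup => //; exact: box_measurable.
  - exact: hb'.
  - by move=> z; have := hMB (ctup z); rewrite /= !indicE.
rewrite /=.
transitivity (\int[@lebesgue_measure R]_x (fubini_F mu (EFin \o (f \o ctup)) x))%E.
  apply: eq_integral => x _.
  by rewrite (hi _ (good_section x gf)).
rewrite integral12_prod_meas1 //.
have := @integral_pushforward _ _ _ _ R ctup (@mctup R p) (@lebesgue_measure R \x mu)%E setT (EFin \o f).
rewrite preimage_setT => ->//.
by apply/measurable_EFinP; case: gf.
Qed.
End Key.
Arguments box {R} p B.
Arguments good {R p} f.
Arguments good_bound {R p f}.

Section J.
Variables (R : realType) (p : nat) (mu : {measure set (p.-tuple R) -> \bar R}).
Hypothesis hb : forall B, (mu (box p B) < +oo)%E.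
Implicit Types f g : p.-tuple R -> R.

Lemma good_int f : good f -> mu.-integrable setT (EFin \o f).
Proof.
move=> gf; have [M [B hMB]] := good_bound gf.
apply: (@integrable_bdd R _ _ mu f (box p B) M) => //.
- by case: gf.
- exact: box_measurable.
Qed.

Definition J (f : p.-tuple R -> R) := fine (\int[mu]_x (f x)%:E)%E.

Lemma good_add f g : good f -> good g -> good (fun x => f x + g x).
Proof.
case=> mf [M1 h1] [B1 b1] [mg [M2 h2] [B2 b2]]; split.
- exact: measurable_funD.
- by exists (M1 + M2) => x; apply: (le_trans (ler_normD _ _)); exact: lerD.
- exists (Num.max B1 B2) => x hx i.
  have [fx|fx] := eqVneq (f x) 0.
    have gx : g x != 0 by move: hx; rewrite fx add0r.
    by rewrite le_max (b2 _ gx i) orbT.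
  by rewrite le_max (b1 _ fx i).
Qed.

Lemma good_scale c f : good f -> good (fun x => c * f x).
Proof.
case=> mf [M1 h1] [B1 b1]; split.
- exact: measurable_funM.
- by exists (`|c| * M1) => x; rewrite normrM; apply: ler_wpM2l.
- exists B1 => x hx; apply: b1; apply: contraNneq hx => ->; by rewrite mulr0.
Qed.

Lemma good0 : good (fun _ : p.-tuple R => 0).
Proof.
split; [exact: measurable_cst | by exists 0 => x; rewrite normr0 | by exists 0 => x; rewrite eqxx].
Qed.

Lemma good_sum I (r : seq I) (F : I -> p.-tuple R -> R) :
  (forall i, good (F i)) -> good (fun x => \sum_(i <- r) F i x).
Proof.
move=> hF; elim: r => [|a r ih].
  under [X in good X]funext do rewrite big_nil; exact: good0.
under [X in good X]funext do rewrite big_cons.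
exact: good_add.
Qed.

Lemma J_fin f : good f -> (\int[mu]_x (f x)%:E)%E \is a fin_num.
Proof. by move=> gf; apply: integrable_fin_num => //; exact: good_int. Qed.

Lemma J_add f g : good f -> good g -> J (fun x => f x + g x) = J f + J g.
Proof.
move=> gf gg; rewrite /J.
under eq_integral do rewrite EFinD.
rewrite integralD //; [|exact: good_int|exact: good_int].
by rewrite fineD //; exact: J_fin.
Qed.

Lemma J_scale c f : good f -> J (fun x => c * f x) = c * J f.
Proof.
move=> gf; rewrite /J.
under eq_integral do rewrite EFinM.
rewrite integralZl //; last exact: good_int.
by rewrite fineM //; exact: J_fin.
Qed.

Lemma J_le f g : good f -> good g -> (forall x, f x <= g x) -> J f <= J g.
Proof.
move=> gf gg hfg; rewrite /J; apply: fine_le; [exact: J_fin|exact: J_fin|].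
apply: le_integral => //; [exact: good_int|exact: good_int|].
by move=> x _; rewrite lee_fin.
Qed.

Lemma J0 : J (fun _ : p.-tuple R => 0) = 0.
Proof. by rewrite /J integral0. Qed.

Lemma J_sum I (r : seq I) (F : I -> p.-tuple R -> R) :
  (forall i, good (F i)) -> J (fun x => \sum_(i <- r) F i x) = \sum_(i <- r) J (F i).
Proof.
move=> hF; elim: r => [|a r ih].
  rewrite big_nil; under [X in J X]funext do rewrite big_nil; exact: J0.
rewrite big_cons -ih; under [X in J X]funext do rewrite big_cons.
by rewrite J_add //; exact: good_sum.
Qed.
End J.

Section Dual.
Variable R : realType.

Lemma lip_cont (V : normedModType R) (g : V -> R) K : 0 <= K ->
  (forall u v, `|g u - g v| <= K * `|u - v|) -> continuous g.
Proof.
move=> K0 hg x; apply/cvgrPdist_lt => e e0.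
have K1 : 0 < K + 1 by rewrite ltr_wpDl.
have ee : 0 < e / (K + 1) by rewrite divr_gt0.
near=> y.
apply: (le_lt_trans (hg x y)).
have hy : `|x - y| < e / (K + 1).
  near: y; apply/nbhs_normP; exists (e / (K + 1)) => //= z.
apply: (le_lt_trans (ler_wpM2l K0 (ltW hy))).
rewrite mulrA ltr_pdivrMr // mulrDr mulr1 [X in X < _]mulrC ltrDl.
exact: e0.
Unshelve. all: by end_near.
Qed.

Lemma entry_le_norm m n (x : 'M[R]_(m,n)) i j : `|x i j| <= `|x|.
Proof.
have -> : `|x| = mx_norm x by [].
rewrite mx_normrE.
exact: (@le_bigmax _ _ _ 0 (fun ij => `|x ij.1 ij.2|) (i, j)).
Qed.

Section NormFacts.
Variables (k1 k2 : nat) (Rn : 'M[R]_(k1, k2) -> R) (hRn : is_norm Rn).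

Lemma Rn0 : Rn 0 = 0.
Proof. case: hRn => _ _ hZ _; by rewrite -(scale0r (0 : 'M[R]_(k1,k2))) hZ normr0 mul0r. Qed.

Lemma RnN A : Rn (- A) = Rn A.
Proof. case: hRn => _ _ hZ _; by rewrite -scaleN1r hZ normrN normr1 mul1r. Qed.

Lemma Rn_ge0 A : 0 <= Rn A.
Proof. by case: hRn. Qed.

Lemma RnD A B : Rn (A + B) <= Rn A + Rn B.
Proof. by case: hRn. Qed.

Lemma RnZ a A : Rn (a *: A) = `|a| * Rn A.
Proof. by case: hRn. Qed.

Lemma Rn_sum I (r : seq I) (F : I -> 'M[R]_(k1,k2)) :
  Rn (\sum_(i <- r) F i) <= \sum_(i <- r) Rn (F i).
Proof.
elim: r => [|a r ih]; first by rewrite !big_nil Rn0.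
rewrite !big_cons; apply: (le_trans (RnD _ _)); exact: lerD.
Qed.

Definition Gv (v : 'rV[R]_(k1 * k2)) := Rn (vec_mx v).
Definition KG := \sum_(k < k1 * k2) Rn (vec_mx (delta_mx 0 k : 'rV[R]_(k1 * k2))).

Lemma KG_ge0 : 0 <= KG.
Proof. by apply: sumr_ge0 => k _; exact: Rn_ge0. Qed.

Lemma Gv_le v : Gv v <= KG * `|v|.
Proof.
rewrite /Gv {1}(row_sum_delta v) linear_sum /=.
apply: (le_trans (Rn_sum _ _ _)).
rewrite /KG mulr_suml; apply: ler_sum => k _.
rewrite linearZ /= RnZ mulrC; apply: ler_wpM2l; first exact: Rn_ge0.
exact: entry_le_norm.
Qed.

Lemma GvD u v : Gv (u + v) <= Gv u + Gv v.
Proof. by rewrite /Gv linearD /=; exact: RnD. Qed.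

Lemma GvN u : Gv (- u) = Gv u.
Proof. by rewrite /Gv linearN /= RnN. Qed.

Lemma Gv_lip u v : `|Gv u - Gv v| <= KG * `|u - v|.
Proof.
have h1 : Gv u <= Gv v + Gv (u - v).
  by have := GvD v (u - v); rewrite addrC subrK.
have h2 : Gv v <= Gv u + Gv (u - v).
  by rewrite -(GvN (u - v)) opprB; have := GvD u (v - u); rewrite [u + _]addrC subrK.
have h3 := Gv_le (u - v).
rewrite ler_norml; apply/andP; split; lra.
Qed.

Lemma Gv_cont : continuous Gv.
Proof. exact: (@lip_cont _ _ _ KG_ge0 Gv_lip). Qed.

Lemma norm_equiv : exists C, forall A, Rn A <= 1 -> forall i j, `|A i j| <= C.
Proof.
have [N0|Npos] := posnP (k1 * k2).
  exists 0 => A _ [i hi] [j hj]; exfalso.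
  move/eqP: N0; rewrite muln_eq0 => /orP[] /eqP h.
    by rewrite h in hi.
  by rewrite h in hj.
pose S := [set v : 'rV[R]_(k1 * k2) | `|v| = 1].
have S0 : S !=set0.
  pose c : 'rV[R]_(k1 * k2) := const_mx 1.
  have c0 : c != 0.
    apply/negP => /eqP/matrixP/(_ 0 (Ordinal Npos)); rewrite !mxE => /eqP.
    by rewrite oner_eq0.
  exists (`|c|^-1 *: c); rewrite /S /= normrZ normfV normr_id mulVf //.
  by rewrite normr_eq0.
have cS : compact S.
  apply: bounded_closed_compact.
    exists 1; split; first exact: num_real.
    by move=> M M1 x /= ->; exact: ltW.
  have -> : S = (@Num.norm _ _) @^-1` [set x | x = 1] by [].
  exact: (continuous_closedP _).1 (@norm_continuous _ _) _ (@closed_eq R 1).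
have [c cS' cmin] := compact_EVT_min S0 cS (continuous_subspaceT Gv_cont).
have nc : `|c| = 1 by move: cS'; rewrite inE.
have m0 : 0 < Gv c.
  rewrite lt_neqAle Rn_ge0 andbT; apply/negP => /eqP/esym h.
  case: hRn => _ h2 _ _; have := h2 _ h => /(congr1 mxvec); rewrite vec_mxK linear0 => c0.
  by move: nc; rewrite c0 normr0 => /eqP; rewrite eq_sym oner_eq0.
exists (Gv c)^-1 => A hA i j.
have [v0|v0] := eqVneq (mxvec A) 0.
  have -> : A = 0 by rewrite -(mxvecK A) v0 linear0.
  by rewrite mxE normr0 invr_ge0 ltW.
set v := mxvec A in v0 *.
have nv : 0 < `|v| by rewrite normr_gt0.
have wS : (`|v|^-1 *: v) \in S.
  by rewrite inE /S /= normrZ normfV normr_id mulVf // gt_eqF.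
have := cmin _ wS; rewrite /Gv linearZ /= RnZ mxvecK normfV normr_id => h.
have hv : `|v| <= (Gv c)^-1.
  rewrite -(ler_pM2l m0) mulfV ?gt_eqF //.
  apply: (le_trans _ hA); rewrite -ler_pdivlMr // mulrC; exact: h.
apply: le_trans hv; rewrite -(mxvecE A) ; exact: entry_le_norm.
Qed.

Lemma dual_ge M A : Rn A <= 1 -> frob M A <= dual_norm Rn M.
Proof.
move=> hA; have [C hC] := norm_equiv.
apply: sup_upper_bound; last by exists A.
split.
  by exists (frob M 0), 0 => //; rewrite Rn0.
exists (\sum_i \sum_j `|M i j| * C) => y [B hB ->].
rewrite /frob; apply: ler_sum => i _; apply: ler_sum => j _.
apply: (le_trans (ler_norm _)); rewrite normrM; apply: ler_wpM2l => //.
exact: hC.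
Qed.
End NormFacts.
End Dual.

Section Hess.
Variable R : realType.

Lemma derive_line (V W : normedModType R) (f : V -> W) x v :
  'D_v f x = 'D_1 (fun h : R => f (h *: v + x)) 0.
Proof.
rewrite /derive.
set g1 := fun h => h^-1 *: _; set g2 := fun h => h^-1 *: _.
suff -> : g1 = g2 by [].
by rewrite funeqE /g1 /g2 => h /=; rewrite addr0 scale0r add0r [_%:A]mulr1.
Qed.

Lemma exp_line (a b : R) : derivable (fun h : R => expR (h *: b + a)) 0 1 /\
  'D_1 (fun h : R => expR (h *: b + a)) 0 = b * expR a.
Proof.
have dexp : differentiable (@expR R) a by apply/derivable1_diffP; exact: derivable_expR.
split. have := (derivable1P (@expR R) a b).1 (@diff_derivable R R^o R^o expR a b dexp). by []. 
rewrite -derive_line deriveE // diff1E // derive1E.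
have -> : derive (@expR R) a 1 = expR a by exact: (@derive_val _ _ _ _ _ _ _ (is_derive_expR a)).
by [].   
Qed.

Lemma dsumexp n (al b a : 'I_n -> R) :
  derivable (fun h : R => \sum_t al t * expR (h *: b t + a t)) 0 1 /\
  'D_1 (fun h : R => \sum_t al t * expR (h *: b t + a t)) 0 =
    \sum_t al t * (b t * expR (a t)).
Proof.
have -> : (fun h : R => \sum_t al t * expR (h *: b t + a t)) =
    \sum_t (al t \*: (fun h : R => expR (h *: b t + a t))).
  by rewrite fct_sumE.
have d t : derivable (al t \*: (fun h : R => expR (h *: b t + a t))) 0 1.
  by apply: derivableZ; exact: (exp_line _ _).1.
split; first exact: derivable_sum.
rewrite derive_sum //; apply: eq_bigr => t _.
by rewrite deriveZ ?(exp_line _ _).2 //; exact: (exp_line _ _).1.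
Qed.

Definition Lf m1 m2 (P : 'M[R]_(m1, m2)) (w : 'rV[R]_(m1 * m2)) := frob (vec_mx w) P.
Arguments Lf {m1 m2}.

Lemma Lf_lin m1 m2 (P : 'M[R]_(m1, m2)) (h : R) e w :
  Lf P (h *: e + w) = h * Lf P e + Lf P w.
Proof.
rewrite /Lf /frob linearD linearZ /= mulr_sumr -big_split /=; apply: eq_bigr => i _.
rewrite mulr_sumr -big_split /=; apply: eq_bigr => j _.
by rewrite !mxE mulrDl mulrA.
Qed.

Definition Fs m1 m2 n (al : 'I_n -> R) (Ps : 'I_n -> 'M[R]_(m1, m2)) (w : 'rV[R]_(m1 * m2)) :=
  \sum_t al t * expR (- Lf (Ps t) w).
Arguments Fs {m1 m2 n}.

Lemma dFs m1 m2 n al (Ps : 'I_n -> 'M[R]_(m1, m2)) w e :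
  derivable (Fs al Ps) w e /\
  'D_e (Fs al Ps) w = \sum_t al t * (- Lf (Ps t) e * expR (- Lf (Ps t) w)).
Proof.
have eq : (fun h : R => Fs al Ps (h *: e + w)) =
   (fun h : R => \sum_t al t * expR (h *: (- Lf (Ps t) e) + (- Lf (Ps t) w))).
  apply/funext => h; apply: eq_bigr => t _; rewrite Lf_lin opprD.
  by rewrite -mulrN.
have D := @dsumexp n al (fun t => - Lf (Ps t) e) (fun t => - Lf (Ps t) w).
split; first by apply/derivable1P; rewrite eq; exact: D.1.
by rewrite derive_line eq D.2.
Qed.

Lemma DFs m1 m2 n al (Ps : 'I_n -> 'M[R]_(m1, m2)) e :
  'D_e (Fs al Ps) = Fs (fun t => al t * - Lf (Ps t) e) Ps.
Proof.
apply/funext => w; rewrite (dFs _ _ _ _ Ps w e).2; apply: eq_bigr => t _.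
by rewrite mulrA.
Qed.


Lemma hess_Fs m1 m2 n c (Ps : 'I_n -> 'M[R]_(m1, m2)) v a b :
  hessian (Fs (fun _ => c) Ps) v a b =
  \sum_t c * (Lf (Ps t) (delta_mx 0 a) * Lf (Ps t) (delta_mx 0 b)) * expR (- Lf (Ps t) v).
Proof.
rewrite /hessian mxE DFs (proj2 (dFs _ _ _ _ Ps v (delta_mx 0 a))).
by apply: eq_bigr => t _; ring.
Qed.

Lemma Lf_delta m1 m2 (P : 'M[R]_(m1, m2)) a : exists i j, Lf P (delta_mx 0 a) = P i j.
Proof.
case/mxvec_indexP: a => i j; exists i, j.
rewrite /Lf vec_mx_delta /frob (bigD1 i) //= (bigD1 j) //= big1; last first.
  by move=> j' hj; rewrite mxE eqxx /= (negbTE hj) mul0r.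
rewrite big1; last first.
  move=> i' hi; apply: big1 => j' _; by rewrite mxE (negbTE hi) mul0r.
by rewrite mxE !eqxx mul1r !addr0.
Qed.
End Hess.

Section Eig.
Variable R : realType.

Lemma sq_sum_le N (z : 'I_N -> R) : (\sum_a z a) ^+ 2 <= N%:R * \sum_a z a ^+ 2.
Proof.
rewrite expr2 mulr_suml.
apply: (@le_trans _ _ (\sum_a \sum_b ((z a ^+ 2 + z b ^+ 2) / 2))).
  apply: ler_sum => a _; rewrite mulr_sumr; apply: ler_sum => b _.
  have h : 0 <= (z a - z b) ^+ 2 := sqr_ge0 _.
  lra.
under eq_bigr do rewrite -mulr_suml big_split /= sumr_const card_ord.
rewrite -mulr_suml big_split /= sumr_const card_ord.
rewrite (_ : \sum_(i < N) z i ^+ 2 *+ N = N%:R * \sum_a z a ^+ 2); last first.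
  by rewrite mulr_sumr; apply: eq_bigr => i _; rewrite mulr_natl.
rewrite -mulr_natl; lra.
Qed.

Lemma eig_bound N n (H : 'M[R]_N) (c : R) (l : 'I_n -> 'I_N -> R) (E : 'I_n -> R)
    K Emax lam :
  0 <= c -> (forall a b, H a b = \sum_t c * (l t a * l t b) * E t) ->
  (forall t, 0 <= E t <= Emax) -> (forall t a, `|l t a| <= K) ->
  eigenvalue H lam -> lam <= (n%:R * c) * N%:R * K ^+ 2 * Emax.
Proof.
move=> c0 hH hE hl /eigenvalueP [u hu u0].
pose s := \sum_a u 0 a ^+ 2.
pose S t := \sum_a u 0 a * l t a.
have hq : \sum_b (u *m H) 0 b * u 0 b = \sum_t c * E t * (S t) ^+ 2.
  transitivity (\sum_b \sum_a \sum_t c * E t * ((u 0 a * l t a) * (u 0 b * l t b))).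
    apply: eq_bigr => b _; rewrite mxE mulr_suml; apply: eq_bigr => a _.
    rewrite hH mulr_sumr mulr_suml; apply: eq_bigr => t _; ring.
  rewrite exchange_big /=.
  under eq_bigr do rewrite exchange_big /=.
  rewrite exchange_big /=; apply: eq_bigr => t _.
  rewrite /S expr2 mulr_suml mulr_sumr; apply: eq_bigr => a _.
  rewrite mulr_sumr mulr_sumr; apply: eq_bigr => b _; ring.
have hq2 : \sum_b (u *m H) 0 b * u 0 b = lam * s.
  rewrite hu /s mulr_sumr; apply: eq_bigr => b _; rewrite mxE; ring.
have s0 : 0 < s.
  have [a ha] : exists a, u 0 a != 0.
    apply/existsP; apply: contraNT u0 => /existsPn h; apply/eqP/rowP => a.
    by rewrite mxE; apply/eqP; have := h a; rewrite negbK.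
  rewrite /s (bigD1 a) //= ltr_pwDl //.
    by rewrite exprn_even_gt0 // ha.
  by apply: sumr_ge0 => i _; exact: sqr_ge0.
have K0 : forall t, (S t) ^+ 2 <= N%:R * K ^+ 2 * s.
  move=> t; apply: (le_trans (sq_sum_le _ _)).
  rewrite -mulrA ler_wpM2l // /s mulr_sumr; apply: ler_sum => a _.
  rewrite exprMn mulrC ler_wpM2r ?sqr_ge0 //.
  rewrite -real_normK ?num_real // -[K ^+ 2]real_normK ?num_real //.
  rewrite lerXn2r ?nnegrE ?normr_ge0 //.
  by apply: (le_trans (hl t a)); exact: ler_norm.
have hb : lam * s <= ((n%:R * c) * N%:R * K ^+ 2 * Emax) * s.
  rewrite -hq2 hq.
  apply: (@le_trans _ _ (\sum_(t < n) c * Emax * (N%:R * K ^+ 2 * s))).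
    apply: ler_sum => t _; apply: ler_pM.
    - by apply: mulr_ge0 => //; case/andP: (hE t).
    - exact: sqr_ge0.
    - by apply: ler_wpM2l => //; case/andP: (hE t).
    - exact: K0.
  rewrite sumr_const card_ord -[_ *+ n]mulr_natl le_eqVlt; apply/orP; left; apply/eqP; ring.
by rewrite -(ler_pM2r s0).
Qed.
End Eig.

Arguments Lf {R m1 m2}.
Arguments Fs {R m1 m2 n}.
Arguments J {R p}.

Section Misc.
Variable R : realType.

Lemma frobC k1 k2 (A B : 'M[R]_(k1, k2)) : frob A B = frob B A.
Proof. by rewrite /frob; apply: eq_bigr => i _; apply: eq_bigr => j _; rewrite mulrC. Qed.

Lemma frobZr k1 k2 (A B : 'M[R]_(k1, k2)) c : frob A (c *: B) = c * frob A B.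
Proof.
rewrite /frob mulr_sumr; apply: eq_bigr => i _; rewrite mulr_sumr; apply: eq_bigr => j _.
by rewrite mxE mulrCA.
Qed.

Lemma frobBr k1 k2 (A B C : 'M[R]_(k1, k2)) : frob A (B - C) = frob A B - frob A C.
Proof.
rewrite /frob -sumrB; apply: eq_bigr => i _; rewrite -sumrB; apply: eq_bigr => j _.
by rewrite !mxE mulrBr.
Qed.

Lemma maxnorm_ge0 k1 k2 (M : 'M[R]_(k1, k2)) : 0 <= maxnorm M.
Proof.
rewrite /maxnorm; elim/big_ind: _ => //.
  by move=> x y hx hy; rewrite le_max hx.
move=> i _; elim/big_ind: _ => //.
by move=> x y hx hy; rewrite le_max hx.
Qed.

Lemma entry_le_maxnorm k1 k2 (M : 'M[R]_(k1, k2)) i j : `|M i j| <= maxnorm M.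
Proof.
rewrite /maxnorm.
apply: le_trans (le_bigmax _ (fun i => \big[Num.max/0]_j `|M i j|) i).
exact: (le_bigmax _ (fun j => `|M i j|) j).
Qed.
End Misc.
Arguments frobC {R k1 k2}.
Arguments frobZr {R k1 k2}.
Arguments frobBr {R k1 k2}.
Arguments maxnorm_ge0 {R k1 k2}.
Arguments entry_le_maxnorm {R k1 k2}.

Theorem propositionB1 (R : realType) (p k1 k2 n : nat)
  (X : set (p.-tuple R))
  (hXmeas : measurable X)
  (hXbdd : exists B : R, forall x, X x -> forall i, `|tnth x i| <= B)
  (hXvol : (0 < volume X < +oo)%E)
  (Phi : p.-tuple R -> 'M[R]_(k1, k2))
  (hPhimeas : forall i j, measurable_fun X (fun x => Phi x i j))
  (Rn : 'M[R]_(k1, k2) -> R) (hRn : is_norm Rn)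
  (r d phimax : R) (Theta_star : 'M[R]_(k1, k2))
  (xs : 'I_n -> p.-tuple R) (hn : (0 < n)%N) (hxs : forall t, X (xs t))
  (hstar : Rn Theta_star <= r)
  (hd : forall x, X x -> dual_norm Rn (Phi x) <= d)
  (hphi : forall x, X x -> maxnorm (Phi x) <= phimax)
  (rbar : R) (hrbar : 0 < rbar) :
  forall Theta : 'M[R]_(k1, k2), Rn Theta <= rbar ->
  forall lambda : R,
    eigenvalue (hessian (fun v => Ln X Phi xs (vec_mx v)) (mxvec Theta)) lambda ->
    lambda <= 4 * (k1 * k2)%:R * phimax ^+ 2 * expR (2 * rbar * d).
Proof.
move=> Theta hTh lam heig.
have [mu [hbox hint]] := key R p.
pose Ps t := Phi_tilde X Phi (xs t).
have hF : (fun v => Ln X Phi xs (vec_mx v)) = Fs (fun _ => n%:R^-1) Ps.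
  by apply/funext => v; rewrite /Ln /Fs mulr_sumr.
rewrite hF in heig.
pose t0 : 'I_n := Ordinal hn.
have phi0 : 0 <= phimax := le_trans (maxnorm_ge0 _) (hphi _ (hxs t0)).
have ePhi x : X x -> forall i j, `|Phi x i j| <= phimax.
  by move=> Xx i j; apply: le_trans (hphi x Xx); exact: entry_le_maxnorm.
have hdual x : X x -> frob Theta (Phi x) <= rbar * d /\ - frob Theta (Phi x) <= rbar * d.
  move=> Xx.
  have rb0 : 0 < rbar^-1 by rewrite invr_gt0.
  have hA c : `|c| = rbar^-1 -> frob (Phi x) (c *: Theta) <= d.
    move=> hc; apply: le_trans (hd x Xx); apply: dual_ge => //.
    rewrite RnZ // hc; rewrite -(ler_pM2l hrbar) mulrA mulfV ?gt_eqF // mul1r mulr1.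
    exact: hTh.
  have h1 := hA rbar^-1 (gtr0_norm rb0).
  have h2 : frob (Phi x) ((- rbar^-1) *: Theta) <= d by apply: hA; rewrite normrN gtr0_norm.
  rewrite frobZr in h1; rewrite frobZr in h2.
  rewrite frobC; split.
    by rewrite -(ler_pM2l rb0) mulrA mulVf ?gt_eqF // mul1r.
  by rewrite -(ler_pM2l rb0) mulrA mulVf ?gt_eqF // mul1r mulrN; move: h2; rewrite mulNr.
have [B hB] := hXbdd.
have gI : good (fun x : p.-tuple R => \1_X x : R).
  split.
  - exact: measurable_indic.
  - by exists 1 => x; rewrite indicE; case: (x \in X); rewrite ?normr1 ?normr0.
  - exists B => x; rewrite indicE; case: (boolP (x \in X)) => [/set_mem Xx _|_]; last by rewrite eqxx.
    exact: hB.
have gG i j : good (fun x => \1_X x * Phi x i j).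
  split.
  - have := (measurable_restrictT _ hXmeas).1 (hPhimeas i j).
    apply: eq_measurable_fun => x _; rewrite /patch indicE.
    by case: (x \in X); rewrite ?mul1r ?mul0r.
  - by exists phimax => x; rewrite indicE; case: (boolP (x \in X)) => [/set_mem Xx|_];
      rewrite ?mul1r ?mul0r ?normr0 // ePhi.
  - exists B => x; rewrite indicE; case: (boolP (x \in X)) => [/set_mem Xx _|_]; last by rewrite mul0r eqxx.
    exact: hB.
have hJ f : good f -> fine (iter_lebesgue_integral (EFin \o f)) = J mu f.
  by move=> gf; rewrite (hint _ gf).
pose V := J mu (fun x : p.-tuple R => \1_X x : R).
have hVdef : fine (volume X) = V by rewrite /V -hJ.
have V0 : 0 < V by rewrite -hVdef; apply: fine_gt0.
have hmean i j : uniform_mean X Phi i j = J mu (fun x => \1_X x * Phi x i j) / V.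
  by rewrite /uniform_mean mxE -hVdef -hJ.
have hmb i j : `|uniform_mean X Phi i j| <= phimax.
  rewrite hmean normrM normfV (gtr0_norm V0) ler_pdivrMr // ler_norml.
  have hle : forall s : R, `|s| = 1 -> J mu (fun x => s * (\1_X x * Phi x i j)) <= phimax * V.
    move=> s hs; rewrite /V -J_scale //.
    apply: J_le => //; [exact: good_scale|exact: good_scale|].
    move=> x; rewrite indicE; case: (boolP (x \in X)) => [/set_mem Xx|_]; rewrite ?mul1r ?mulr1 ?mul0r ?mulr0 //.
    by apply: le_trans (ler_norm _) _; rewrite normrM hs mul1r ePhi.
  have := hle 1 (normr1 _).
  have := hle (-1); rewrite normrN normr1 => /(_ erefl).
  rewrite !J_scale // mul1r mulN1r => h1 h2; apply/andP; split => //.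
  by rewrite lerNl.
have hmu : frob Theta (uniform_mean X Phi) <= rbar * d.
  have -> : frob Theta (uniform_mean X Phi) =
      J mu (fun x => \sum_i \sum_j Theta i j * (\1_X x * Phi x i j)) / V.
    rewrite J_sum //; last by move=> i; apply: good_sum => j; exact: good_scale.
    rewrite /frob mulr_suml; apply: eq_bigr => i _.
    rewrite J_sum //; last by move=> j; exact: good_scale.
    rewrite mulr_suml; apply: eq_bigr => j _.
    by rewrite J_scale // hmean mulrA.
  rewrite ler_pdivrMr // /V -J_scale //.
  apply: J_le => //; [by apply: good_sum => i; apply: good_sum => j; exact: good_scale|exact: good_scale|].
  move=> x; rewrite indicE; case: (boolP (x \in X)) => [/set_mem Xx|_].
    rewrite mulr1; apply: le_trans (proj1 (hdual x Xx)); rewrite le_eqVlt; apply/orP; left.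
    by apply/eqP; rewrite /frob; apply: eq_bigr => i _; apply: eq_bigr => j _; rewrite mul1r.
  by rewrite mulr0 big1 // => i _; rewrite big1 // => j _; rewrite mul0r mulr0.
have hl t a : `|Lf (Ps t) (delta_mx 0 a)| <= 2 * phimax.
  have [i [j ->]] := Lf_delta _ _ _ (Ps t) a.
  rewrite /Ps /Phi_tilde mxE (_ : (- uniform_mean X Phi) i j = - uniform_mean X Phi i j); last by rewrite mxE.
  apply: le_trans (ler_normD _ _) _; rewrite normrN.
  have -> : 2 * phimax = phimax + phimax by ring.
  by apply: lerD; [exact: ePhi|exact: hmb].
have hE t : 0 <= expR (- Lf (Ps t) (mxvec Theta)) <= expR (2 * rbar * d).
  rewrite expR_ge0 /= ler_expR /Lf mxvecK /Ps /Phi_tilde frobBr opprB.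
  have := hdual _ (hxs t); have := hmu; lra.
have c0 : 0 <= n%:R^-1 :> R by rewrite invr_ge0 ler0n.
have := @eig_bound R (k1 * k2) n _ n%:R^-1 (fun t a => Lf (Ps t) (delta_mx 0 a))
  (fun t => expR (- Lf (Ps t) (mxvec Theta))) (2 * phimax) (expR (2 * rbar * d)) lam
  c0 (hess_Fs _ _ _ _ _ _ _) hE hl heig.
rewrite mulfV ?pnatr_eq0 -?lt0n // => /le_trans; apply.
rewrite le_eqVlt; apply/orP; left; apply/eqP; ring.
Qed.
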